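(* Let $\sigma$ be a finite relational signature, $\mathcal{A}$ a finite $\sigma$-structure, and $\varphi=\forall x^1,\dots,x^m\,\exists \bar y\; P(x^1,\dots,x^m,\bar y)$ a sentence where $P$ is a conjunction of atomic $\sigma$-formulas. Then $\mathcal{A}\models\varphi$ if and only if there is a homomorphism of $\sigma\cup C_m$-structures from $\mathfrak{D}_\varphi$ to $\mathfrak{A}^{|A|^m}$.
   Context: $C_m=\{c_1,\dots,c_m\}$ is a set of new constant symbols; a homomorphism of $\sigma\cup C_m$-structures preserves all relations of $\sigma$ and maps the interpretation of each $c_i$ to the interpretation of $c_i$. $\mathfrak{D}_\varphi$ is the $\sigma\cup C_m$-structure whose domain is the set of variables of $\varphi$, whose relation tuples are exactly the atoms of $P$, and in which $c_i$ is interpreted by $x^i$. For a map $\lambda:\{1,\dots,m\}\to A$, $\mathfrak{A}_\lambda$ is the expansion of $\mathcal{A}$ interpreting $c_i$ by $\lambda(i)$. The ''Superprodukt'' $\mathfrak{A}^{|A|^m}$ is the direct product $\bigotimes_{\lambda\in A^{\{1,\dots,m\}}}\mathfrak{A}_\lambda$: domain $A^{A^{\{1,\dots,m\}}}$, relations holding coordinatewise, and $c_i$ interpreted by the tuple whose $\lambda$-coordinate is $\lambda(i)$. *)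

(* Defs.v *)
From mathcomp Require Import all_boot.
From Stdlib Require List.
Set Implicit Arguments. Unset Strict Implicit. Unset Printing Implicit Defensive.

Record structure (S : finType) (ar : S -> nat) (T : Type) := Structure {
  rel : forall s : S, (ar s).-tuple T -> Prop }.

(* A sigma ∪ C_m structure: a sigma-structure plus interpretations of the
   constants c_1..c_m (indexed by 'I_m). *)
Record cstructure (S : finType) (ar : S -> nat) (m : nat) (T : Type) := CStructure {
  cbase : structure ar T;
  cst : 'I_m -> T }.

Definition is_chom (S : finType) (ar : S -> nat) (m : nat) (T U : Type)
  (D : cstructure ar m T) (E : cstructure ar m U) (h : T -> U) : Prop :=
  (forall (s : S) (t : (ar s).-tuple T),
      rel (cbase D) t -> rel (cbase E) (map_tuple h t)) /\
  (forall i : 'I_m, h (cst D i) = cst E i).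

(* A primitive-positive-prefix sentence
     forall x^1..x^m exists y_1..y_k, P
   with P a conjunction of relational atoms.  Variables are 'I_m + 'I_k
   (inl i = x^{i+1}, inr j = y_{j+1}); P is the list of its atoms. *)
Record ae_sentence (S : finType) (ar : S -> nat) := AESentence {
  nx : nat;
  ny : nat;
  atoms : seq {s : S & (ar s).-tuple (sum 'I_nx 'I_ny)} }.

Definition sat (S : finType) (ar : S -> nat) (T : Type) (A : structure ar T)
  (phi : ae_sentence ar) : Prop :=
  forall a : 'I_(nx phi) -> T, exists b : 'I_(ny phi) -> T,
    forall at0, List.In at0 (atoms phi) ->
      rel A (map_tuple (fun v => match v with inl i => a i | inr j => b j end)
                       (projT2 at0)).

Definition canon_struct (S : finType) (ar : S -> nat) (phi : ae_sentence ar)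
  : cstructure ar (nx phi) (sum 'I_(nx phi) 'I_(ny phi)) :=
  CStructure (Structure (fun s t => List.In (existT _ s t) (atoms phi)))
             (fun i => inl i).

Definition expand (S : finType) (ar : S -> nat) (m : nat) (T : Type)
  (A : structure ar T) (lam : 'I_m -> T) : cstructure ar m T :=
  CStructure A lam.

Definition cprod (S : finType) (ar : S -> nat) (m : nat) (T I : Type)
  (F : I -> cstructure ar m T) : cstructure ar m (I -> T) :=
  CStructure
    (Structure (fun s (t : (ar s).-tuple (I -> T)) =>
       forall i : I, rel (cbase (F i)) (map_tuple (fun f => f i) t)))
    (fun c i => cst (F i) c).

Definition superprod (S : finType) (ar : S -> nat) (m : nat) (A : finType)
  (SA : structure ar A) : cstructure ar m ({ffun 'I_m -> A} -> A) :=
  cprod (fun lam : {ffun 'I_m -> A} => expand SA lam).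

(* Main.v *)
Require Import Defs.
From mathcomp Require Import all_boot.
From Stdlib Require Import ClassicalEpsilon.

Lemma mt_ext (T U : Type) n (f g : T -> U) (t : n.-tuple T) :
  (forall x, f x = g x) -> map_tuple f t = map_tuple g t.
Proof. move=> H; apply: val_inj => /=; exact: eq_map. Qed.

Lemma mt_comp (T U V : Type) n (f : T -> U) (g : U -> V) (t : n.-tuple T) :
  map_tuple g (map_tuple f t) = map_tuple (fun x => g (f x)) t.
Proof. apply: val_inj => /=; by rewrite -map_comp. Qed.

Theorem mainTheorem5 (S : finType) (ar : S -> nat) (A : finType)
  (SA : structure ar A) (phi : ae_sentence ar) :
  sat SA phi <->
  exists h : (sum 'I_(nx phi) 'I_(ny phi)) -> ({ffun 'I_(nx phi) -> A} -> A),
    is_chom (canon_struct phi) (superprod (nx phi) SA) h.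
Proof.
split.
- move=> Hs.
  have Hb : forall lam : {ffun 'I_(nx phi) -> A}, { b : 'I_(ny phi) -> A |
     forall at0, List.In at0 (atoms phi) ->
      Defs.rel SA (map_tuple (fun v => match v with inl i => lam i | inr j => b j end)
                       (projT2 at0)) }.
    move=> lam; apply: constructive_indefinite_description; exact: Hs.
  exists (fun (v : sum 'I_(nx phi) 'I_(ny phi)) (lam : {ffun 'I_(nx phi) -> A}) => match v with inl i => lam i | inr j => sval (Hb lam) j end).
  split.
  + move=> s t /= Hin lam /=.
    rewrite mt_comp.
    have := svalP (Hb lam) _ Hin; rewrite /=.
    move=> H; congr (Defs.rel _ _): H; apply: mt_ext; case.
  + by move=> i /=.
- move=> [h [Hr Hc]] a.
  pose lam := finfun a.
  exists (fun j => h (inr j) lam) => at0 Hin.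
  case: at0 Hin => s t Hin /=.
  have := Hr s t Hin lam; rewrite /= mt_comp.
  move=> H; congr (Defs.rel _ _): H; apply: mt_ext; case=> [i|j] //=.
  by rewrite (Hc i) /= /lam ffunE.
Qed.
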